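(* Let $(G,c)$ be a W-state graph, and let $X$ and $X'$ be the vertex sets of the two connected components of the spanning subgraph $G_m=(V(G),E_m(G))$ of monochromatic edges. Then the set of bichromatic edges $E_b(G)$ equals the cut $\delta(X,X')$, the set of edges with one endpoint in $X$ and the other in $X'$.
   Context: Graphs may have parallel edges but no loops. A half-edge $2$-colouring $c$ of $G$ assigns to each pair $(e,w)$ with $w$ an endpoint of edge $e$ a colour in $\{0,1\}$ (0 = blue, 1 = red). An edge $e=uv$ is bichromatic if $c(e,u)\neq c(e,v)$ and monochromatic otherwise; $E_m(G)$, $E_b(G)$ denote the monochromatic and bichromatic edge sets; standing convention: monochromatic edges are blue at both ends. A graph is matching-covered if every edge lies in some perfect matching. A W-state graph is a half-edge $2$-coloured matching-covered graph $(G,c)$ in which every perfect matching contains exactly one bichromatic edge, and every vertex $v$ is incident with an edge $e$ with $c(e,v)=1$. For any W-state graph, $G_m$ has exactly two connected components, each factor-critical (a graph $F$ is factor-critical if $F-u$ has a perfect matching for every vertex $u$). *)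

(* Defs.v *)
(* Finite multigraphs: vertex type V, edge type E (parallel
   edges allowed), each edge e has an ordered pair of endpoints [ends e]. *)
From mathcomp Require Import all_boot.
Set Implicit Arguments. Unset Strict Implicit. Unset Printing Implicit Defensive.

Section WState.
Variables (V E : finType) (ends : E -> V * V).

Definition loopless := forall e, (ends e).1 != (ends e).2.

Definition incident (e : E) (w : V) : bool :=
  (w == (ends e).1) || (w == (ends e).2).

Definition perfect_matching (M : {set E}) : bool :=
  [forall v, #|[set e in M | incident e v]| == 1].

Definition matching_covered : Prop :=
  forall e : E, exists M : {set E}, perfect_matching M /\ e \in M.

(* Half-edge 2-colouring: c e w is the colour of the half-edge (e,w);
   only meaningful when w is an endpoint of e. true = 1 = red, false = 0 = blue. *)
Variable c : E -> V -> bool.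

Definition bichromatic (e : E) : bool := c e (ends e).1 != c e (ends e).2.
Definition monochromatic (e : E) : bool := ~~ bichromatic e.

Definition Eb : {set E} := [set e | bichromatic e].
Definition Em : {set E} := [set e | monochromatic e].

Definition mono_blue : Prop :=
  forall e, monochromatic e -> c e (ends e).1 = false /\ c e (ends e).2 = false.

Definition W_state : Prop :=
  [/\ matching_covered,
      (forall M : {set E}, perfect_matching M -> #|M :&: Eb| = 1)
    & (forall v : V, exists e : E, incident e v && c e v)].

Definition mono_adj : rel V :=
  fun u v => [exists e, monochromatic e &&
                ((ends e == (u, v)) || (ends e == (v, u)))].

Definition mono_component (X : {set V}) : Prop :=
  exists x : V, X = [set y | connect mono_adj x y].

Definition cut (X X' : {set V}) : {set E} :=
  [set e | (((ends e).1 \in X) && ((ends e).2 \in X'))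
        || (((ends e).1 \in X') && ((ends e).2 \in X))].

End WState.

(* Main.v *)
Require Import Defs.
From mathcomp Require Import all_boot.

Lemma sum_eq_mem (V : finType) (X : {set V}) (a : V) :
  \sum_(v in X) nat_of_bool (v == a) = nat_of_bool (a \in X).
Proof.
case: (boolP (a \in X)) => Ha.
  rewrite (bigD1 a) //= eqxx big1 // => v /andP[_ /negbTE ->] //.
rewrite big1 // => v Hv; case: eqP Hv => // -> Hv; by rewrite Hv in Ha.
Qed.

Lemma parity (V E : finType) (ends : E -> V * V) (X : {set V}) (M : {set E}) :
  loopless ends -> perfect_matching ends M ->
  #|X| = \sum_(h in M) (((ends h).1 \in X) + ((ends h).2 \in X)).
Proof.
move=> Hl /forallP PM.
rewrite -sum1_card.
transitivity (\sum_(v in X) \sum_(h in M) nat_of_bool (incident ends h v)).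
  apply: eq_bigr => v _. move/eqP: (PM v) => <-.
  rewrite -sum1_card.
  rewrite [RHS]big_mkcond [LHS]big_mkcond /=; apply: eq_bigr => h _.
  by rewrite inE; case: (h \in M); case: incident.
rewrite exchange_big /=; apply: eq_bigr => h _.
transitivity (\sum_(v in X) (nat_of_bool (v == (ends h).1) + nat_of_bool (v == (ends h).2))).
  apply: eq_bigr => v _; rewrite /incident.
  have := Hl h; case: (v =P (ends h).1) => [E1|]; case: (v =P (ends h).2) => [E2|] //=.
  by rewrite -E1 -E2 eqxx.
by rewrite big_split /= !sum_eq_mem.
Qed.

Lemma mono_adj_sym (V E : finType) (ends : E -> V * V) (c : E -> V -> bool) :
  symmetric (mono_adj ends c).
Proof.
move=> u v; apply/existsP/existsP => -[e He]; exists e; by rewrite orbC.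
Qed.

Lemma comp_eq {V E : finType} {ends : E -> V * V} {c : E -> V -> bool} a b :
  connect (mono_adj ends c) a b -> forall y,
  connect (mono_adj ends c) a y = connect (mono_adj ends c) b y.
Proof.
move=> hab y; have S := sym_connect_sym (@mono_adj_sym V E ends c).
apply/idP/idP => H.
  by apply: connect_trans H; rewrite S.
exact: connect_trans hab H.
Qed.

Lemma disj {V E : finType} {ends : E -> V * V} {c : E -> V -> bool}
  {X X' : {set V}} :
  mono_component ends c X -> mono_component ends c X' -> X != X' ->
  forall v, v \in X -> v \in X' -> False.
Proof.
move=> [x ->] [x' ->] /eqP hne v; rewrite !inE => h1 h2; apply: hne.
apply/setP => y; rewrite !inE (comp_eq _ _ h1) (comp_eq _ _ h2) //.
Qed.

Lemma mono_same {V E : finType} {ends : E -> V * V} {c : E -> V -> bool}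
  {X X' : {set V}} :
  mono_component ends c X -> mono_component ends c X' -> X != X' ->
  (forall v : V, (v \in X) || (v \in X')) ->
  forall h, monochromatic ends c h -> ((ends h).1 \in X) = ((ends h).2 \in X).
Proof.
move=> cX cX' ne cov h hm.
have adj : mono_adj ends c (ends h).1 (ends h).2.
  apply/existsP; exists h; rewrite hm /=; by case: (ends h) => a b; rewrite eqxx.
have clos : forall Y, mono_component ends c Y -> (ends h).1 \in Y -> (ends h).2 \in Y.
  move=> Y [y ->]; rewrite !inE => H; apply: connect_trans H (connect1 adj).
case: (boolP ((ends h).1 \in X)) => H1; first by rewrite clos.
have H1' : (ends h).1 \in X' by move: (cov (ends h).1); rewrite (negbTE H1).
apply/esym/negbTE/negP => H2. exact: (disj cX cX' ne _ H2 (clos _ cX' H1')).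
Qed.

Lemma key {V E : finType} {ends : E -> V * V} {c : E -> V -> bool}
  {X X' : {set V}} :
  loopless ends ->
  mono_blue ends c ->
  W_state ends c ->
  mono_component ends c X -> mono_component ends c X' -> X != X' ->
  (forall v : V, (v \in X) || (v \in X')) ->
  forall e, bichromatic ends c e -> (ends e).1 \in X -> (ends e).2 \in X -> False.
Proof.
move=> Hl Hb [Hmc Hone Hred] cX cX' ne cov e he e1 e2.
have same := mono_same cX cX' ne cov.
have only : forall M f h, perfect_matching ends M -> f \in M -> bichromatic ends c f ->
    h \in M -> bichromatic ends c h -> h = f.
  move=> M f h PM fM bf hM bh; case: (eqVneq h f) => // hne.
  have : #|[set h; f]| <= #|M :&: Eb ends c|.
    apply: subset_leq_card; apply/subsetP => z.
    rewrite !inE; case/orP => /eqP ->; rewrite /Eb ?inE.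
      by rewrite hM bh.
    by rewrite fM bf.
  by rewrite cards2 hne Hone.
have allss : forall M f h, perfect_matching ends M -> f \in M -> bichromatic ends c f ->
    ((ends f).1 \in X) = ((ends f).2 \in X) ->
    h \in M -> ((ends h).1 \in X) = ((ends h).2 \in X).
  move=> M f h PM fM bf sf hM; case: (boolP (bichromatic ends c h)) => bh.
    by rewrite (only M f h).
  exact: same.
have [Me [PMe eMe]] := Hmc e.
have ssMe : forall h, h \in Me -> ((ends h).1 \in X) = ((ends h).2 \in X).
  move=> h; apply: (allss Me e) => //; by rewrite e1 e2.
have [x' Hx'] := cX'.
have wX' : x' \in X' by rewrite Hx' inE connect0.
have wX : x' \notin X by apply/negP => H; exact: (disj cX cX' ne _ H wX').
have [g /andP[ig cg]] := Hred x'.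
have bg : bichromatic ends c g.
  case: (boolP (bichromatic ends c g)) => // mg; exfalso.
  have [c1 c2] := Hb g mg.
  by move: ig cg; rewrite /incident => /orP[]/eqP->; rewrite ?c1 ?c2.
have [Mg [PMg gMg]] := Hmc g.
have key_inc : forall h v, ((ends h).1 \in X) = ((ends h).2 \in X) ->
    incident ends h v -> ((ends h).1 \in X) = (v \in X).
  by move=> h v sh /orP[]/eqP->.
case: (boolP (((ends g).1 \in X) == ((ends g).2 \in X))) => /eqP ssg.
  have ssMg : forall h, h \in Mg -> ((ends h).1 \in X) = ((ends h).2 \in X).
    move=> h; exact: (allss Mg g).
  have g1 : ((ends g).1 \in X) = false.
    by rewrite (key_inc g x' ssg ig) (negbTE wX).
  pose M := [set h in Me | (ends h).1 \in X] :|: [set h in Mg | (ends h).1 \notin X].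
  have PM : perfect_matching ends M.
    apply/forallP => v.
    case: (boolP (v \in X)) => vX.
      have -> : [set h in M | incident ends h v] = [set h in Me | incident ends h v].
        apply/setP => h; rewrite !inE.
        case ih: (incident ends h v); rewrite ?andbF ?andbT //.
        case hMe: (h \in Me); case hMg: (h \in Mg) => /=;
        rewrite ?(key_inc h v (ssMe h hMe) ih) ?(key_inc h v (ssMg h hMg) ih) ?vX //.
      exact: (forallP PMe v).
    have -> : [set h in M | incident ends h v] = [set h in Mg | incident ends h v].
      apply/setP => h; rewrite !inE.
      case ih: (incident ends h v); rewrite ?andbF ?andbT //.
      case hMe: (h \in Me); case hMg: (h \in Mg) => /=;
      rewrite ?(key_inc h v (ssMe h hMe) ih) ?(key_inc h v (ssMg h hMg) ih) ?(negbTE vX) //.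
    exact: (forallP PMg v).
  have eM : e \in M by rewrite !inE eMe e1.
  have gM : g \in M by rewrite !inE gMg g1 andbF.
  have := only M e g PM eM he gM bg.
  by move=> E'; rewrite E' e1 in g1.
have d1 : 2 %| #|X|.
  rewrite (@parity _ _ ends X _ Hl PMe); apply: dvdn_sum => h hM.
  by rewrite (ssMe h hM); case: (_ \in X).
have d2 : ~~ (2 %| #|X|).
  rewrite (@parity _ _ ends X _ Hl PMg) (bigD1 g) //= dvdn_addl.
    by move: ssg; case: (_ \in X); case: (_ \in X) => //= H; case: H.
  apply: dvdn_sum => h /andP[hM hne].
  have mh : monochromatic ends c h.
    rewrite /monochromatic; apply/negP => bh; by rewrite (only Mg g h) ?eqxx in hne.
  by rewrite (same h mh); case: (_ \in X).
by rewrite d1 in d2.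
Qed.

Theorem mainTheorem9 (V E : finType) (ends : E -> V * V) (c : E -> V -> bool)
  (X X' : {set V}) :
  loopless ends ->
  mono_blue ends c ->
  W_state ends c ->
  mono_component ends c X -> mono_component ends c X' -> X != X' ->
  (forall v : V, (v \in X) || (v \in X')) ->
  Eb ends c = cut ends X X'.
Proof.
move=> Hl Hb W cX cX' ne cov.
have ne' : X' != X by rewrite eq_sym.
have cov' : forall v, (v \in X') || (v \in X) by move=> v; rewrite orbC.
have inX' : forall v, v \notin X -> v \in X'.
  by move=> v /negbTE H; move: (cov v); rewrite H.
have inX : forall v, v \notin X' -> v \in X.
  by move=> v /negbTE H; move: (cov' v); rewrite H.
apply/setP => e; rewrite /Eb /cut !inE.
apply/idP/idP.
  move=> he.
  case h1: ((ends e).1 \in X).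
    case h2: ((ends e).2 \in X).
      by exfalso; exact: (key Hl Hb W cX cX' ne cov _ he h1 h2).
    by rewrite (inX' _ (negbT h2)).
  have h1' : (ends e).1 \in X' := (inX' _ (negbT h1)).
  case h2: ((ends e).2 \in X); first by rewrite h1' orbT.
  have h2' : (ends e).2 \in X' := (inX' _ (negbT h2)).
  by exfalso; exact: (key Hl Hb W cX' cX ne' cov' _ he h1' h2').
case: (boolP (bichromatic ends c e)) => // m.
move=> hc; exfalso; have H := mono_same cX cX' ne cov e m.
case/orP: hc => /andP[a b].
  rewrite a in H; exact: (disj cX cX' ne _ (esym H) b).
have a' : (ends e).1 \in X by rewrite H.
exact: (disj cX cX' ne _ a' a).
Qed.
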